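(* Let $Z\subset\mathbb{S}_2$ be a finite nonempty set of points. Then the following are equivalent: (i) $Z=\{Q\}$ for a single point $Q\in(E_1\cup E_2)\setminus\widetilde{L_{12}}$; (ii) $\alpha(Z)=\alpha(2Z)=\alpha(3Z)=\alpha(4Z)=1$ and $\alpha(5Z)>1$.
   Context: Let $P_1,P_2\in\mathbb{P}^2(\mathbb{C})$ be two general (distinct) points and $f\colon\mathbb{S}_2\to\mathbb{P}^2$ the blow-up at them, with exceptional curves $E_i=f^{-1}(P_i)$; let $H$ be the pullback of the class of a line and $\mathbb{L}_2=3H-E_1-E_2=-K_{\mathbb{S}_2}$. $L_{12}$ is the line through $P_1,P_2$ and $\widetilde{L_{12}}$ its proper transform in $\mathbb{S}_2$. For a finite set $Z\subset\mathbb{S}_2$ with ideal sheaf $\mathcal{I}_Z$ and a positive integer $m$, $\alpha(mZ)=\min\{d\ge 0:\ H^0(\mathbb{S}_2,d\mathbb{L}_2\otimes\mathcal{I}_Z^{(m)})\neq 0\}$, i.e. the least $d$ such that some effective divisor $D\in|d\mathbb{L}_2|$ has multiplicity at least $m$ at every point of $Z$. *)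

(* Defs.v *)
From HB Require Import structures.
From mathcomp Require Import all_boot all_order all_algebra.
From mathcomp Require Import mpoly.
From mathcomp Require Import complex.
From mathcomp Require Import Rstruct.
From Stdlib Require Import ClassicalEpsilon.

Set Implicit Arguments.
Unset Strict Implicit.
Unset Printing Implicit Defensive.

Import GRing.Theory.
Local Open Scope ring_scope.

Definition CC : fieldType := complex Rdefinitions.R.

(* Homogeneous coordinates X0, X1, X2 on P^2.  Since any two distinct points
   of P^2 are projectively equivalent, we take P1 = [1:0:0], P2 = [0:1:0];
   then L12 = {X2 = 0}. *)
Definition poly3 := {mpoly CC[3]}.
Definition poly2 := {mpoly CC[2]}.

(* Points of S_2 = Bl_{P1,P2} P^2, given by representatives:
   - Pl x y z : the point (preimage of) [x:y:z] in P^2 \ {P1,P2};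
   - Ex1 a b  : the point of E1 corresponding to the tangent direction at P1
                with (affine coords X1/X0, X2/X0)-direction [a:b];
   - Ex2 a b  : the point of E2 corresponding to the tangent direction at P2
                with (affine coords X0/X1, X2/X1)-direction [a:b]. *)
Inductive S2pt :=
| Pl  of CC & CC & CC
| Ex1 of CC & CC
| Ex2 of CC & CC.

(* Validity of a representative. [x:y:z] <> P1 iff (y,z) <> 0,
   [x:y:z] <> P2 iff (x,z) <> 0. *)
Definition valid_pt (Q : S2pt) : Prop :=
  match Q with
  | Pl x y z => (y, z) <> (0, 0) /\ (x, z) <> (0, 0)
  | Ex1 a b => (a, b) <> (0, 0)
  | Ex2 a b => (a, b) <> (0, 0)
  end.

Definition same_pt (Q Q' : S2pt) : Prop :=
  match Q, Q' with
  | Pl x y z, Pl x' y' z' =>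
      exists c : CC, c != 0 /\ x' = c * x /\ y' = c * y /\ z' = c * z
  | Ex1 a b, Ex1 a' b' => exists c : CC, c != 0 /\ a' = c * a /\ b' = c * b
  | Ex2 a b, Ex2 a' b' => exists c : CC, c != 0 /\ a' = c * a /\ b' = c * b
  | _, _ => False
  end.

Definition on_exc (Q : S2pt) : Prop :=
  match Q with Pl _ _ _ => False | _ => True end.

(* Q lies on the proper transform of L12 = {X2 = 0}.  The proper transform
   meets E1 (resp. E2) in the direction of L12, i.e. b = 0. *)
Definition on_L12t (Q : S2pt) : Prop :=
  match Q with
  | Pl _ _ z => z = 0
  | Ex1 _ b => b = 0
  | Ex2 _ b => b = 0
  end.

Definition homog3 (e : nat) (F : poly3) : Prop :=
  forall m, m \in msupp F -> mdeg m = e.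

(* Multiplicity of the plane curve {F = 0} at the point [p0:p1:p2] is >= r:
   the Taylor expansion F(p + v) has no monomial of degree < r in v. *)
Definition mult_ge_P2 (F : poly3) (p0 p1 p2 : CC) (r : nat) : Prop :=
  let G : poly3 :=
    F \mPo [tuple 'X_0 + p0%:MP; 'X_1 + p1%:MP; 'X_2 + p2%:MP] in
  forall m, m \in msupp G -> (r <= mdeg m)%N.

(* A transverse vector (c,e) to a nonzero (a,b). *)
Definition transv (a b : CC) : CC * CC := if a == 0 then (1, 0) else (0, 1).

(* Let D = f^*C - d E1 - d E2 in |d L_2| where C = {F = 0}, F homogeneous of
   degree 3d with mult >= d at P1, P2.  Near the point Q of E1 with direction
   [a:b], the blow-up is parametrised by (u,s) |-> [1 : u(a+sc) : u(b+se)]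
   (E1 = {u = 0}, Q = (0,0)), and D is locally the divisor of
   F(1, u(a+sc), u(b+se)) / u^d.  So mult_Q D >= r iff every monomial u^i s^k
   of  G(u,s) = F(1, u(a+sc), u(b+se))  satisfies  d <= i  and  r <= i - d + k.
   Similarly at E2 with (u,s) |-> [u(a+sc) : 1 : u(b+se)]. *)
Definition mult_ge_E1 (d : nat) (F : poly3) (a b : CC) (r : nat) : Prop :=
  let ce := transv a b in
  let u : poly2 := 'X_0 in let s : poly2 := 'X_1 in
  let G : poly2 :=
    F \mPo [tuple 1; u * (a%:MP + s * ce.1%:MP); u * (b%:MP + s * ce.2%:MP)] in
  forall m, m \in msupp G -> (d <= m ord0)%N /\ (r + d <= m ord0 + m (@Ordinal 2 1 isT))%N.

Definition mult_ge_E2 (d : nat) (F : poly3) (a b : CC) (r : nat) : Prop :=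
  let ce := transv a b in
  let u : poly2 := 'X_0 in let s : poly2 := 'X_1 in
  let G : poly2 :=
    F \mPo [tuple u * (a%:MP + s * ce.1%:MP); 1; u * (b%:MP + s * ce.2%:MP)] in
  forall m, m \in msupp G -> (d <= m ord0)%N /\ (r + d <= m ord0 + m (@Ordinal 2 1 isT))%N.

Definition mult_ge (d : nat) (F : poly3) (Q : S2pt) (r : nat) : Prop :=
  match Q with
  | Pl x y z => mult_ge_P2 F x y z r
  | Ex1 a b => mult_ge_E1 d F a b r
  | Ex2 a b => mult_ge_E2 d F a b r
  end.

(* Nonzero sections of d L_2 = 3dH - dE1 - dE2: nonzero homogeneous F of
   degree 3d with multiplicity >= d at P1 = [1:0:0] and P2 = [0:1:0]. *)
Definition section_dL2 (d : nat) (F : poly3) : Prop :=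
  F != 0 /\ homog3 (3 * d) F /\ mult_ge_P2 F 1 0 0 d /\ mult_ge_P2 F 0 1 0 d.

(* H^0(S_2, d L_2 (x) I_Z^(m)) <> 0 : some D in |d L_2| has multiplicity
   >= m at every point of Z (Z given as a list of representatives). *)
Definition has_div (Z : seq S2pt) (m d : nat) : Prop :=
  exists F, section_dL2 d F /\ forall Q, List.In Q Z -> mult_ge d F Q m.

Definition has_divb (Z : seq S2pt) (m d : nat) : bool :=
  if excluded_middle_informative (has_div Z m d) then true else false.

(* alpha(mZ) = min { d | H^0(d L_2 (x) I_Z^(m)) <> 0 }.
   (Such d always exists; the default value 0 is never used.) *)
Definition alpha (Z : seq S2pt) (m : nat) : nat :=
  match excluded_middle_informative (exists d, has_divb Z m d) with
  | left H => ex_minn H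
  | right _ => 0%N
  end.

(* Main.v *)
Require Import Defs.
From mathcomp Require Import all_boot all_order all_algebra.
From mathcomp Require Import mpoly complex Rstruct.
From mathcomp Require Import ring zify.
From Stdlib Require Import Classical ClassicalEpsilon.
Set Implicit Arguments.
Unset Strict Implicit.
Unset Printing Implicit Defensive.
Import GRing.Theory Num.Theory.
Local Open Scope ring_scope.


Section Bnd.
Variable n : nat.
Variable w : 'X_{1..n} -> nat.
Hypothesis wD : forall m1 m2, w (m1 + m2)%MM = (w m1 + w m2)%N.
Implicit Types p q : {mpoly CC[n]}.

Definition lob t p := forall m, m \in msupp p -> (t <= w m)%N.
Definition hib t p := forall m, m \in msupp p -> (w m <= t)%N.

Lemma w0 : w 0%MM = 0%N.
Proof. have := wD 0%MM 0%MM; rewrite addm0. lia. Qed.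

Lemma lob0 t : lob t 0. Proof. by move=> m; rewrite msupp0. Qed.
Lemma hib0 t : hib t 0. Proof. by move=> m; rewrite msupp0. Qed.
Lemma lobD t p q : lob t p -> lob t q -> lob t (p + q).
Proof. by move=> hp hq m /msuppD_le; rewrite mem_cat => /orP[/hp|/hq]. Qed.
Lemma hibD t p q : hib t p -> hib t q -> hib t (p + q).
Proof. by move=> hp hq m /msuppD_le; rewrite mem_cat => /orP[/hp|/hq]. Qed.
Lemma lobN t p : lob t p -> lob t (- p).
Proof. by move=> hp m; rewrite (perm_mem (msuppN p)) => /hp. Qed.
Lemma hibN t p : hib t p -> hib t (- p).
Proof. by move=> hp m; rewrite (perm_mem (msuppN p)) => /hp. Qed.
Lemma lobB t p q : lob t p -> lob t q -> lob t (p - q).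
Proof. by move=> hp hq; apply: lobD => //; apply: lobN. Qed.
Lemma hibB t p q : hib t p -> hib t q -> hib t (p - q).
Proof. by move=> hp hq; apply: hibD => //; apply: hibN. Qed.
Lemma lobZ t c p : lob t p -> lob t (c *: p).
Proof. by move=> hp m /msuppZ_le /hp. Qed.
Lemma hibZ t c p : hib t p -> hib t (c *: p).
Proof. by move=> hp m /msuppZ_le /hp. Qed.
Lemma lobW t t' p : (t' <= t)%N -> lob t p -> lob t' p.
Proof. by move=> le hp m /hp; apply: leq_trans. Qed.
Lemma hibW t t' p : (t <= t')%N -> hib t p -> hib t' p.
Proof. by move=> le hp m /hp h; apply: leq_trans le. Qed.
Lemma lobM t1 t2 p q : lob t1 p -> lob t2 q -> lob (t1 + t2) (p * q).
Proof.
move=> hp hq m /msuppM_le /allpairsP [[m1 m2]] /= [/hp h1 /hq h2 ->].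
by rewrite wD leq_add.
Qed.
Lemma hibM t1 t2 p q : hib t1 p -> hib t2 q -> hib (t1 + t2) (p * q).
Proof.
move=> hp hq m /msuppM_le /allpairsP [[m1 m2]] /= [/hp h1 /hq h2 ->].
by rewrite wD leq_add.
Qed.
Lemma lobX m : lob (w m) 'X_[m].
Proof. by move=> m'; rewrite msuppX inE => /eqP ->. Qed.
Lemma hibX m : hib (w m) 'X_[m].
Proof. by move=> m'; rewrite msuppX inE => /eqP ->. Qed.
Lemma lobC c : lob 0 c%:MP. Proof. by []. Qed.
Lemma hibC c : hib 0 c%:MP.
Proof. by move=> m; rewrite msuppC; case: (c == 0) => //; rewrite inE => /eqP ->; rewrite w0. Qed.
Lemma lob1 : lob 0 1. Proof. by []. Qed.
Lemma hib1 : hib 0 1. Proof. by rewrite -mpolyC1; apply: hibC. Qed.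
Lemma lobXn t p k : lob t p -> lob (t * k) (p ^+ k).
Proof.
move=> hp; elim: k => [|k ih]; first by rewrite muln0.
by rewrite exprS mulnS; apply: lobM.
Qed.
Lemma hibXn t p k : hib t p -> hib (t * k) (p ^+ k).
Proof.
move=> hp; elim: k => [|k ih]; first by rewrite muln0 expr0; apply: hib1.
by rewrite exprS mulnS; apply: hibM.
Qed.
Lemma lob_prod k (f : 'I_k -> {mpoly CC[n]}) (t : 'I_k -> nat) :
  (forall i, lob (t i) (f i)) -> lob (\sum_(i < k) t i) (\prod_(i < k) f i).
Proof.
move=> h; apply: (big_ind2 (fun a b => lob b a)) => //.
by move=> x1 x2 y1 y2 h1 h2; apply: lobM.
Qed.
Lemma hib_prod k (f : 'I_k -> {mpoly CC[n]}) (t : 'I_k -> nat) :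
  (forall i, hib (t i) (f i)) -> hib (\sum_(i < k) t i) (\prod_(i < k) f i).
Proof.
move=> h; apply: (big_ind2 (fun a b => hib b a)) => //; first exact: hib1.
by move=> x1 x2 y1 y2 h1 h2; apply: hibM.
Qed.
Lemma lob_sum (I : Type) (r : seq I) (P : pred I) (f : I -> {mpoly CC[n]}) t :
  (forall i, P i -> lob t (f i)) -> lob t (\sum_(i <- r | P i) f i).
Proof.
move=> h; apply: (big_ind (lob t)) => //; [exact: lob0 | by move=> x y; apply: lobD].
Qed.
Lemma hib_sum (I : Type) (r : seq I) (P : pred I) (f : I -> {mpoly CC[n]}) t :
  (forall i, P i -> hib t (f i)) -> hib t (\sum_(i <- r | P i) f i).
Proof.
move=> h; apply: (big_ind (hib t)) => //; [exact: hib0 | by move=> x y; apply: hibD].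
Qed.
End Bnd.


Lemma comp_mpolyA n k l (p : {mpoly CC[n]}) (lq : n.-tuple {mpoly CC[k]})
  (lr : k.-tuple {mpoly CC[l]}) :
  (p \mPo lq) \mPo lr = p \mPo [tuple (tnth lq i) \mPo lr | i < n].
Proof.
rewrite (comp_mpolyE p lq) (comp_mpolyE p) raddf_sum /=; apply: eq_bigr => m _.
rewrite comp_mpolyZ rmorph_prod /=; congr (_ *: _); apply: eq_bigr => i _.
by rewrite rmorphXn /= tnth_map tnth_ord_tuple.
Qed.

Lemma lob_comp n k (w : 'X_{1..k} -> nat) (wD : forall m1 m2, w (m1 + m2)%MM = (w m1 + w m2)%N)
  (p : {mpoly CC[n]}) (lq : n.-tuple {mpoly CC[k]}) (t : 'I_n -> nat) T :
  (forall i, lob w (t i) (tnth lq i)) ->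
  (forall m, m \in msupp p -> (T <= \sum_(i < n) t i * m i)%N) ->
  lob w T (p \mPo lq).
Proof.
move=> hq hp; rewrite comp_mpolyE big_seq; apply: lob_sum => m mp.
apply: lobZ; apply: lobW (hp _ mp) _; apply: lob_prod => // i.
by apply: lobXn.
Qed.

Lemma hib_comp n k (w : 'X_{1..k} -> nat) (wD : forall m1 m2, w (m1 + m2)%MM = (w m1 + w m2)%N)
  (p : {mpoly CC[n]}) (lq : n.-tuple {mpoly CC[k]}) (t : 'I_n -> nat) T :
  (forall i, hib w (t i) (tnth lq i)) ->
  (forall m, m \in msupp p -> (\sum_(i < n) t i * m i <= T)%N) ->
  hib w T (p \mPo lq).
Proof.
move=> hq hp; rewrite comp_mpolyE big_seq; apply: hib_sum => m mp.
apply: hibZ; apply: hibW (hp _ mp) _; apply: hib_prod => // i.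
by apply: hibXn.
Qed.

Definition psi n k (mu : 'I_n -> 'X_{1..k}) (m : 'X_{1..n}) : 'X_{1..k} :=
  (\sum_(i < n) (mu i *+ m i))%MM.

Lemma comp_monoE n k (p : {mpoly CC[n]}) (mu : 'I_n -> 'X_{1..k}) :
  p \mPo [tuple 'X_[mu i] | i < n] = \sum_(m <- msupp p) p@_m *: 'X_[psi mu m].
Proof.
rewrite comp_mpolyE; apply: eq_bigr => m _; congr (_ *: _).
rewrite /psi (big_morph _ (@mpolyXD _ _) (@mpolyX0 _ _)); apply: eq_bigr => i _.
by rewrite tnth_map tnth_ord_tuple mpolyXn.
Qed.

Lemma comp_mono_coef n k (p : {mpoly CC[n]}) (mu : 'I_n -> 'X_{1..k}) m0 :
  m0 \in msupp p ->
  (forall m, m \in msupp p -> psi mu m = psi mu m0 -> m = m0) ->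
  (p \mPo [tuple 'X_[mu i] | i < n])@_(psi mu m0) = p@_m0.
Proof.
move=> m0p inj; rewrite comp_monoE raddf_sum /=.
rewrite (bigD1_seq m0) ?msupp_uniq //=.
rewrite mcoeffZ mcoeffX eqxx mulr1 big_seq_cond big1 ?addr0 //.
move=> m /andP[mp ne]; rewrite mcoeffZ mcoeffX.
case: eqP => [/(inj _ mp) e|]; last by rewrite mulr0.
by rewrite e eqxx in ne.
Qed.

Lemma comp_mono_supp n k (p : {mpoly CC[n]}) (mu : 'I_n -> 'X_{1..k}) m' :
  m' \in msupp (p \mPo [tuple 'X_[mu i] | i < n]) ->
  exists2 m, m \in msupp p & m' = psi mu m.
Proof.
rewrite comp_monoE => /msupp_sum_le /flattenP [s] /mapP [m].
rewrite filter_predT => mp -> /msuppZ_le; rewrite msuppX inE => /eqP ->.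
by exists m.
Qed.


Notation o31 := (@Ordinal 3 1 isT).
Notation o32 := (@Ordinal 3 2 isT).

Definition wu (m : 'X_{1..2}) : nat := m ord0.
Definition wt (m : 'X_{1..2}) : nat := (m ord0 + m (@Ordinal 2 1 isT))%N.
Lemma wuD m1 m2 : wu (m1 + m2)%MM = (wu m1 + wu m2)%N.
Proof. by rewrite /wu mnmDE. Qed.
Lemma wtD m1 m2 : wt (m1 + m2)%MM = (wt m1 + wt m2)%N.
Proof. rewrite /wt !mnmDE; lia. Qed.

Lemma mdeg3 (m : 'X_{1..3}) : mdeg m = (m ord0 + m o31 + m o32)%N.
Proof. rewrite mdegE !big_ord_recr big_ord0 /= add0n; congr (m _ + m _ + m _)%N; exact: val_inj. Qed.

Lemma mult_ge_E1_lob d F a b r :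
  let ce := transv a b in
  let G : poly2 := F \mPo [tuple 1; 'X_0 * (a%:MP + 'X_1 * ce.1%:MP); 'X_0 * (b%:MP + 'X_1 * ce.2%:MP)] in
  lob wu d G -> lob wt (r + d) G -> mult_ge_E1 d F a b r.
Proof. by move=> ce G h1 h2 m hm; split; [apply: h1 | apply: h2]. Qed.

Lemma mult_ge_E2_lob d F a b r :
  let ce := transv a b in
  let G : poly2 := F \mPo [tuple 'X_0 * (a%:MP + 'X_1 * ce.1%:MP); 1; 'X_0 * (b%:MP + 'X_1 * ce.2%:MP)] in
  lob wu d G -> lob wt (r + d) G -> mult_ge_E2 d F a b r.
Proof. by move=> ce G h1 h2 m hm; split; [apply: h1 | apply: h2]. Qed.

Definition shift3 (x y z : CC) : 3.-tuple poly3 :=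
  [tuple 'X_0 + x%:MP; 'X_1 + y%:MP; 'X_2 + z%:MP].

Lemma mult_ge_P2_lob F x y z r : lob mdeg r (F \mPo shift3 x y z) -> mult_ge_P2 F x y z r.
Proof. by []. Qed.

Lemma homog3_bnd e F : homog3 e F <-> lob mdeg e F /\ hib mdeg e F.
Proof.
split=> [h|[h1 h2] m hm]; last by apply/eqP; rewrite eqn_leq h1 ?h2.
by split=> m hm; rewrite (h m hm).
Qed.

Definition L1 (a b : CC) : 3.-tuple poly3 :=
  [tuple 'X_0; a%:MP * 'X_1 + (transv a b).1%:MP * 'X_2;
               b%:MP * 'X_1 + (transv a b).2%:MP * 'X_2].

Definition mu1 (i : 'I_3) : 'X_{1..2} :=
  match val i with 0 => 0%MM | 1 => mnm1 (0 : 'I_2) | _ => (mnm1 (0%R : 'I_2) + mnm1 (1%R : 'I_2))%MM end.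

Definition T1 (a b : CC) : 3.-tuple poly2 :=
  [tuple 1; 'X_0 * (a%:MP + 'X_1 * (transv a b).1%:MP);
            'X_0 * (b%:MP + 'X_1 * (transv a b).2%:MP)].

Lemma compXt n k (i : 'I_n) (lq : n.-tuple {mpoly CC[k]}) : 'X_i \mPo lq = tnth lq i.
Proof. by rewrite comp_mpolyXU (tnth_nth 0). Qed.

Lemma compM n k (p q : {mpoly CC[n]}) (lq : n.-tuple {mpoly CC[k]}) :
  (p * q) \mPo lq = (p \mPo lq) * (q \mPo lq).
Proof. exact: rmorphM. Qed.

Lemma chartE1 (F : poly3) a b :
  F \mPo T1 a b = (F \mPo L1 a b) \mPo [tuple 'X_[mu1 i] | i < 3].
Proof.
rewrite comp_mpolyA; congr (comp_mpoly _ F); apply: eq_from_tnth => i.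
rewrite tnth_mktuple !(tnth_nth 0).
case: i => [[|[|[|//]]] ?]; rewrite [nth _ _ _]/= [nth _ _ _]/=.
- by rewrite compXt tnth_mktuple /mu1 /= mpolyX0.
- rewrite comp_mpolyD !rmorphM /= !comp_mpolyC !compXt !tnth_mktuple /mu1 /= mpolyXD.
  ring.
- rewrite comp_mpolyD !rmorphM /= !comp_mpolyC !compXt !tnth_mktuple /mu1 /= mpolyXD.
  ring.
Qed.


Lemma sum3m k (f : 'I_3 -> 'X_{1..k}) : (\sum_(i < 3) f i)%MM = (f ord0 + f o31 + f o32)%MM.
Proof. rewrite !big_ord_recr big_ord0 /= add0m; congr (f _ + f _ + f _)%MM; exact: val_inj. Qed.

Lemma psi1E (m : 'X_{1..3}) :
  psi mu1 m (0%R : 'I_2) = (m o31 + m o32)%N /\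
  psi mu1 m (1%R : 'I_2) = m o32.
Proof.
rewrite /psi sum3m /mu1 /= !mnmDE !mulmnE !mnmDE !mnm1E !mnm0E /=.
split; lia.
Qed.

Lemma mnm3P (m m' : 'X_{1..3}) :
  m ord0 = m' ord0 -> m o31 = m' o31 -> m o32 = m' o32 -> m = m'.
Proof.
move=> h0 h1 h2; apply/mnmP => -[[|[|[|//]]] Hi].
- by rewrite (_ : Ordinal Hi = ord0) //; apply: val_inj.
- by rewrite (_ : Ordinal Hi = o31) //; apply: val_inj.
- by rewrite (_ : Ordinal Hi = o32) //; apply: val_inj.
Qed.

Lemma lobXi n (i : 'I_n) : lob mdeg 1 ('X_i : {mpoly CC[n]}).
Proof. by have := @lobX n mdeg (U_(i))%MM; rewrite mdeg1. Qed.
Lemma hibXi n (i : 'I_n) : hib mdeg 1 ('X_i : {mpoly CC[n]}).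
Proof. by have := @hibX n mdeg (U_(i))%MM; rewrite mdeg1. Qed.
Lemma lobCX n (i : 'I_n) c : lob mdeg 1 (c%:MP * 'X_i : {mpoly CC[n]}).
Proof. by have := lobM mdegD (@lobC _ mdeg c) (@lobXi n i); rewrite add0n. Qed.
Lemma hibCX n (i : 'I_n) c : hib mdeg 1 (c%:MP * 'X_i : {mpoly CC[n]}).
Proof. by have := hibM mdegD (@hibC _ mdeg mdegD c) (@hibXi n i); rewrite add0n. Qed.

Lemma L1_lin a b i : lob mdeg 1 (tnth (L1 a b) i) /\ hib mdeg 1 (tnth (L1 a b) i).
Proof.
rewrite (tnth_nth 0); case: i => [[|[|[|//]]] ?]; rewrite [nth _ _ _]/=.
- by split; [apply: lobXi | apply: hibXi].
- by split; [apply: lobD; apply: lobCX | apply: hibD; apply: hibCX].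
- by split; [apply: lobD; apply: lobCX | apply: hibD; apply: hibCX].
Qed.

Lemma sum1m (m : 'X_{1..3}) : (\sum_(i < 3) 1 * m i)%N = mdeg m.
Proof. by rewrite mdegE; apply: eq_bigr => i _; rewrite mul1n. Qed.

Lemma mult_ge_E1_T1 d F a b r : mult_ge_E1 d F a b r <->
  forall m, m \in msupp (F \mPo T1 a b) -> (d <= m ord0)%N /\ (r + d <= m ord0 + m (@Ordinal 2 1 isT))%N.
Proof. by []. Qed.

Lemma suppE1 F a b r : homog3 3 F -> mult_ge_E1 1 F a b r ->
  forall m, m \in msupp (F \mPo L1 a b) ->
    mdeg m = 3%N /\ (r + 1 <= m o31 + m o32 + m o32)%N.
Proof.
move=> /homog3_bnd [hl hh] /mult_ge_E1_T1 hm.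
have hFl : lob mdeg 3 (F \mPo L1 a b).
  apply: (lob_comp mdegD (t := fun _ => 1%N)) => [i|m mF]; first by case: (L1_lin a b i).
  by rewrite sum1m; apply: hl.
have hFh : hib mdeg 3 (F \mPo L1 a b).
  apply: (hib_comp mdegD (t := fun _ => 1%N)) => [i|m mF]; first by case: (L1_lin a b i).
  by rewrite sum1m; apply: hh.
have deg3 : forall m, m \in msupp (F \mPo L1 a b) -> mdeg m = 3%N.
  by move=> m mF; apply/eqP; rewrite eqn_leq hFl ?hFh.
move=> m mF; split; first exact: deg3.
have : psi mu1 m \in msupp (F \mPo T1 a b).
  rewrite chartE1 mcoeff_msupp comp_mono_coef //; first by rewrite -mcoeff_msupp.
  move=> m' mF' e; have [e1 e2] := psi1E m; have [e1' e2'] := psi1E m'.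
  have := deg3 _ mF; have := deg3 _ mF'; rewrite !mdeg3 => d1 d2.
  rewrite e in e1' e2'; apply: mnm3P; lia.
move=> /hm [_]; have [e1 e2] := psi1E m.
rewrite (_ : @Ordinal 2 1 isT = 1%R) //; last by apply: val_inj.
rewrite (_ : ord0 = 0%R) //. rewrite e1 e2; lia.
Qed.

Definition del (a b : CC) := a * (transv a b).2 - b * (transv a b).1.

Lemma del_neq0 a b : (a, b) <> (0, 0) -> del a b != 0.
Proof.
move=> h; rewrite /del /transv; have [a0|a0] := eqVneq a 0 => /=.
  rewrite a0 mul0r mulr1 sub0r oppr_eq0; apply/eqP => b0; apply: h; by rewrite a0 b0.
by rewrite mulr1 mulr0 subr0.
Qed.

Definition Li1 (a b : CC) : 3.-tuple poly3 :=
  [tuple 'X_0; ((transv a b).2 / del a b)%:MP * 'X_1 - ((transv a b).1 / del a b)%:MP * 'X_2;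
               (- b / del a b)%:MP * 'X_1 + (a / del a b)%:MP * 'X_2].

Lemma invE1 a b (F : poly3) : (a, b) <> (0, 0) -> F = (F \mPo L1 a b) \mPo Li1 a b.
Proof.
move=> /del_neq0; rewrite /Li1 /L1 /del; case: (transv a b) => c e /= hd.
rewrite comp_mpolyA -{1}(comp_mpoly_id F); congr (comp_mpoly _ F); apply: eq_from_tnth => i.
rewrite !tnth_mktuple (tnth_nth 0).
case: i => [[|[|[|//]]] Hi]; rewrite [nth _ _ _]/=.
- by rewrite compXt (tnth_nth 0) /=; congr 'X_ _; by apply: val_inj.
- rewrite comp_mpolyD !compM !comp_mpolyC !compXt !(tnth_nth 0) /=.
  set d := a * e - b * c.
  have h1 : a * (e / d) + c * (- b / d) = 1 by rewrite /d; field.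
  have h2 : - a * (c / d) + c * (a / d) = 0 by field.
  symmetry; transitivity ((a * (e / d) + c * (- b / d))%:MP * 'X_1 +
                (- a * (c / d) + c * (a / d))%:MP * ('X_2 : poly3)).
    ring.
  rewrite h1 h2 mul1r mul0r addr0; congr 'X_ _; by apply: val_inj.
- rewrite comp_mpolyD !compM !comp_mpolyC !compXt !(tnth_nth 0) /=.
  set d := a * e - b * c.
  have h1 : b * (e / d) + e * (- b / d) = 0 by field.
  have h2 : - b * (c / d) + e * (a / d) = 1 by rewrite /d; field.
  symmetry; transitivity ((b * (e / d) + e * (- b / d))%:MP * 'X_1 +
                (- b * (c / d) + e * (a / d))%:MP * ('X_2 : poly3)).
    ring.
  rewrite h1 h2 mul1r mul0r add0r; congr 'X_ _; by apply: val_inj.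
Qed.

Definition ev3 (x y z : CC) (i : 'I_3) : CC := nth 0 [:: x; y; z] i.

Lemma ev3E x y z : [/\ ev3 x y z 0%R = x, ev3 x y z 1%R = y & ev3 x y z 2%R = z].
Proof. by []. Qed.

Definition m12 : 'X_{1..3} := (mnm1 (1%R : 'I_3) + mnm1 (2%R : 'I_3) *+ 2)%MM.
Definition m03 : 'X_{1..3} := (mnm1 (2%R : 'I_3) *+ 3)%MM.

Lemma m12E : [/\ m12 ord0 = 0%N, m12 o31 = 1%N & m12 o32 = 2%N].
Proof. by rewrite /m12 !mnmDE ?mulmnE !mnm1E. Qed.
Lemma m03E : [/\ m03 ord0 = 0%N, m03 o31 = 0%N & m03 o32 = 3%N].
Proof. by rewrite /m03 ?mnmDE ?mulmnE !mnm1E. Qed.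

Lemma Xm12 : 'X_[m12] = 'X_1 * 'X_2 ^+ 2 :> poly3.
Proof. by rewrite /m12 mpolyXD mpolyXn. Qed.
Lemma Xm03 : 'X_[m03] = 'X_2 ^+ 3 :> poly3.
Proof. by rewrite /m03 mpolyXn. Qed.

Lemma mpoly2E n (p : {mpoly CC[n]}) m1 m2 : m1 != m2 ->
  (forall m, m \in msupp p -> m = m1 \/ m = m2) ->
  p = p@_m1 *: 'X_[m1] + p@_m2 *: 'X_[m2].
Proof.
move=> ne hs; apply/mpolyP => m; rewrite mcoeffD !mcoeffZ !mcoeffX.
case: (eqVneq m1 m) => [e1|n1].
  by rewrite -e1 eq_sym (negbTE ne) mulr1 mulr0 addr0.
case: (eqVneq m2 m) => [e2|n2]; first by rewrite -e2 mulr1 mulr0 add0r.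
rewrite !mulr0 addr0 memN_msupp_eq0 //; apply/negP => /hs [] e.
  by rewrite e eqxx in n1.
by rewrite e eqxx in n2.
Qed.

Lemma mpoly1E n (p : {mpoly CC[n]}) m1 :
  (forall m, m \in msupp p -> m = m1) -> p = p@_m1 *: 'X_[m1].
Proof.
move=> hs; apply/mpolyP => m; rewrite !mcoeffZ !mcoeffX.
case: (eqVneq m1 m) => [e1|n1]; first by rewrite -e1 mulr1.
rewrite mulr0 memN_msupp_eq0 //; apply/negP => /hs e.
by rewrite e eqxx in n1.
Qed.

Lemma class4E1 F a b : homog3 3 F -> (a, b) <> (0, 0) -> mult_ge_E1 1 F a b 4 ->
  exists c1 c2, F = (c1 *: ('X_1 * 'X_2 ^+ 2) + c2 *: 'X_2 ^+ 3) \mPo Li1 a b.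
Proof.
move=> hF ab hm; exists (F \mPo L1 a b)@_m12, (F \mPo L1 a b)@_m03.
rewrite {1}(invE1 F ab) -Xm12 -Xm03; congr comp_mpoly; apply: mpoly2E.
  apply/eqP => e; have := m12E; rewrite e; have [_ -> _] := m03E; by case.
move=> m /(suppE1 hF hm); rewrite mdeg3 => -[d h].
have [e0 e1 e2] := m12E; have [f0 f1 f2] := m03E.
have [h1|h1] : (m o31 = 1 /\ m o32 = 2 /\ m ord0 = 0 \/ m o31 = 0 /\ m o32 = 3 /\ m ord0 = 0)%N by lia.
  by left; apply: mnm3P; lia.
by right; apply: mnm3P; lia.
Qed.

Lemma class5E1 F a b : homog3 3 F -> (a, b) <> (0, 0) -> mult_ge_E1 1 F a b 5 ->
  exists c2, F = (c2 *: 'X_2 ^+ 3) \mPo Li1 a b.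
Proof.
move=> hF ab hm; exists (F \mPo L1 a b)@_m03.
rewrite {1}(invE1 F ab) -Xm03; congr comp_mpoly; apply: mpoly1E.
move=> m /(suppE1 hF hm); rewrite mdeg3 => -[d h].
have [f0 f1 f2] := m03E.
by apply: mnm3P; lia.
Qed.

Lemma evalLi1 c1 c2 a b x y z :
  let d := del a b in let c := (transv a b).1 in let e := (transv a b).2 in
  let l1 := e / d * y - c / d * z in let l2 := - b / d * y + a / d * z in
  ((c1 *: ('X_1 * 'X_2 ^+ 2) + c2 *: 'X_2 ^+ 3) \mPo Li1 a b).@[ev3 x y z] =
  c1 * l1 * l2 ^+ 2 + c2 * l2 ^+ 3.
Proof.
move=> d c e l1 l2.
rewrite comp_mpoly_meval mevalD !mevalZ !mevalM !mevalXU /=.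
rewrite !(tnth_nth 0) /= !mevalD ?mevalN !mevalM !mevalC !mevalXU /=. have [_ -> ->] := ev3E x y z.
rewrite /l1 /l2 /d /c /e; ring.
Qed.

Lemma E1_4 F a b : homog3 3 F -> (a, b) <> (0, 0) -> mult_ge_E1 1 F a b 4 ->
  exists p q, (forall x y z, F.@[ev3 x y z] = (b * y - a * z) ^+ 2 * (p * y + q * z)) /\
              (p = 0 -> q = 0 -> F = 0).
Proof.
move=> hF ab hm; have [c1 [c2 eF]] := class4E1 hF ab hm; have hd := del_neq0 ab.
have dE : del a b = a * (transv a b).2 - b * (transv a b).1 by [].
move: hd eF dE; set d := del a b; set c := (transv a b).1; set e := (transv a b).2 => hd eF dE.
exists ((c1 * e - c2 * b) / d ^+ 3), ((c2 * a - c1 * c) / d ^+ 3); split.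
  by move=> x y z; rewrite eF evalLi1 -/d -/c -/e; field.
move=> /eqP; rewrite mulf_eq0 invr_eq0 expf_eq0 (negbTE hd) andbF orbF => /eqP hp.
move=> /eqP; rewrite mulf_eq0 invr_eq0 expf_eq0 (negbTE hd) andbF orbF => /eqP hq.
have h1 : c1 * d = a * (c1 * e - c2 * b) + b * (c2 * a - c1 * c) by rewrite dE; ring.
have h2 : c2 * d = c * (c1 * e - c2 * b) + e * (c2 * a - c1 * c) by rewrite dE; ring.
move: h1 h2; rewrite hp hq !mulr0 addr0 => /eqP; rewrite mulf_eq0 (negbTE hd) orbF => /eqP c10.
move=> /eqP; rewrite mulf_eq0 (negbTE hd) orbF => /eqP c20.
by rewrite eF c10 c20 !scale0r addr0 comp_mpoly0.
Qed.

Lemma E1_5 F a b : homog3 3 F -> (a, b) <> (0, 0) -> mult_ge_E1 1 F a b 5 ->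
  exists q, (forall x y z, F.@[ev3 x y z] = q * (b * y - a * z) ^+ 3) /\ (q = 0 -> F = 0).
Proof.
move=> hF ab hm; have [c2 eF] := class5E1 hF ab hm; have hd := del_neq0 ab.
move: hd eF; set d := del a b => hd eF.
exists (- c2 / d ^+ 3); split.
  move=> x y z; rewrite eF.
  have -> : (c2 *: 'X_2 ^+ 3 : poly3) = 0 *: ('X_1 * 'X_2 ^+ 2) + c2 *: 'X_2 ^+ 3.
    by rewrite scale0r add0r.
  rewrite evalLi1 -/d.
  by field.
move=> /eqP; rewrite mulf_eq0 invr_eq0 expf_eq0 (negbTE hd) andbF orbF oppr_eq0 => /eqP hq.
by rewrite eF hq scale0r comp_mpoly0.
Qed.

Definition sw : 3.-tuple poly3 := [tuple 'X_1; 'X_0; 'X_2].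

Definition T2 (a b : CC) : 3.-tuple poly2 :=
  [tuple 'X_0 * (a%:MP + 'X_1 * (transv a b).1%:MP); 1;
         'X_0 * (b%:MP + 'X_1 * (transv a b).2%:MP)].

Lemma swT1 (F : poly3) a b : (F \mPo sw) \mPo T1 a b = F \mPo T2 a b.
Proof.
rewrite comp_mpolyA; congr (comp_mpoly _ F); apply: eq_from_tnth => i.
rewrite tnth_mktuple !(tnth_nth 0).
by case: i => [[|[|[|//]]] ?]; rewrite [nth _ _ _]/= [nth _ _ _]/= compXt (tnth_nth 0).
Qed.

Lemma swsw (F : poly3) : (F \mPo sw) \mPo sw = F.
Proof.
rewrite comp_mpolyA -[RHS]comp_mpoly_id; congr (comp_mpoly _ F); apply: eq_from_tnth => i.
rewrite !tnth_mktuple !(tnth_nth 0).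
by case: i => [[|[|[|//]]] ?]; rewrite [nth _ _ _]/= compXt (tnth_nth 0) /=; congr 'X_ _; apply: val_inj.
Qed.

Lemma mult_ge_E2_sw d F a b r : mult_ge_E2 d F a b r <-> mult_ge_E1 d (F \mPo sw) a b r.
Proof.
rewrite mult_ge_E1_T1 swT1; by [].
Qed.

Lemma homog_sw F : homog3 3 F -> homog3 3 (F \mPo sw).
Proof.
move=> /homog3_bnd [hl hh]; apply/homog3_bnd; split.
  apply: (lob_comp mdegD (t := fun _ => 1%N)) => [i|m mF]; last by rewrite sum1m; apply: hl.
  by rewrite (tnth_nth 0); case: i => [[|[|[|//]]] ?]; apply: lobXi.
apply: (hib_comp mdegD (t := fun _ => 1%N)) => [i|m mF]; last by rewrite sum1m; apply: hh.
by rewrite (tnth_nth 0); case: i => [[|[|[|//]]] ?]; apply: hibXi.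
Qed.

Lemma eval_sw F x y z : (F \mPo sw).@[ev3 x y z] = F.@[ev3 y x z].
Proof.
rewrite comp_mpoly_meval; apply: meval_eq => i.
rewrite (tnth_nth 0).
by case: i => [[|[|[|//]]] ?]; rewrite /= mevalXU.
Qed.

Lemma E2_4 F a b : homog3 3 F -> (a, b) <> (0, 0) -> mult_ge_E2 1 F a b 4 ->
  exists p q, (forall x y z, F.@[ev3 x y z] = (b * x - a * z) ^+ 2 * (p * x + q * z)) /\
              (p = 0 -> q = 0 -> F = 0).
Proof.
move=> hF ab /mult_ge_E2_sw hm; have [p [q [h1 h2]]] := E1_4 (homog_sw hF) ab hm.
exists p, q; split; first by move=> x y z; rewrite -eval_sw h1.
by move=> p0 q0; rewrite -(swsw F) (h2 p0 q0) comp_mpoly0.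
Qed.

Lemma E2_5 F a b : homog3 3 F -> (a, b) <> (0, 0) -> mult_ge_E2 1 F a b 5 ->
  exists q, (forall x y z, F.@[ev3 x y z] = q * (b * x - a * z) ^+ 3) /\ (q = 0 -> F = 0).
Proof.
move=> hF ab /mult_ge_E2_sw hm; have [q [h1 h2]] := E1_5 (homog_sw hF) ab hm.
exists q; split; first by move=> x y z; rewrite -eval_sw h1.
by move=> q0; rewrite -(swsw F) (h2 q0) comp_mpoly0.
Qed.


Lemma mult_ge_P2_shift F x y z r : mult_ge_P2 F x y z r <->
  forall m, m \in msupp (F \mPo shift3 x y z) -> (r <= mdeg m)%N.
Proof. by []. Qed.

Lemma multP2_eval F x y z : mult_ge_P2 F x y z 1 -> F.@[ev3 x y z] = 0.
Proof.
move/mult_ge_P2_shift => h.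
have e : (F \mPo shift3 x y z).@[fun _ => 0] = F.@[ev3 x y z].
  rewrite comp_mpoly_meval; apply: meval_eq => i.
  rewrite (tnth_nth 0).
  by case: i => [[|[|[|//]]] ?]; rewrite /= mevalD mevalXU mevalC add0r.
rewrite -e mevalE big_seq big1 // => m /h hm.
rewrite prodrXr expr0n -mdegE.
by rewrite eqn0Ngt hm mulr0.
Qed.

Lemma multP2_4 F x y z : homog3 3 F -> mult_ge_P2 F x y z 4 -> F = 0.
Proof.
move=> /homog3_bnd [_ hh] /mult_ge_P2_shift h.
have hG : hib mdeg 3 (F \mPo shift3 x y z).
  apply: (hib_comp mdegD (t := fun _ => 1%N)) => [i|m mF]; last by rewrite sum1m; apply: hh.
  rewrite (tnth_nth 0); case: i => [[|[|[|//]]] ?] /=;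
  by apply: hibD; [apply: hibXi | apply: (hibW (isT : (0 <= 1)%N)); exact: (@hibC _ mdeg mdegD)].
have G0 : F \mPo shift3 x y z = 0.
  apply: msuppnil0; case E: (msupp _) => [//|m s].
  have mG : m \in msupp (F \mPo shift3 x y z) by rewrite E inE eqxx.
  by have := h _ mG; have := hG _ mG; lia.
have : (F \mPo shift3 x y z) \mPo shift3 (- x) (- y) (- z) = F.
  rewrite comp_mpolyA -[RHS]comp_mpoly_id; congr (comp_mpoly _ F); apply: eq_from_tnth => i.
  rewrite !tnth_mktuple !(tnth_nth 0).
  case: i => [[|[|[|//]]] Hi] /=; rewrite comp_mpolyD compXt comp_mpolyC (tnth_nth 0) /=;
  rewrite rmorphN /= subrK; congr 'X_ _; by apply: val_inj.
by rewrite G0 comp_mpoly0.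
Qed.

Lemma mult_ge_E2_T2 d F a b r : mult_ge_E2 d F a b r <->
  forall m, m \in msupp (F \mPo T2 a b) -> (d <= m ord0)%N /\ (r + d <= m ord0 + m (@Ordinal 2 1 isT))%N.
Proof. by []. Qed.

Lemma nodiv0 F Q r : (0 < r)%N -> section_dL2 0 F -> ~ mult_ge 0 F Q r.
Proof.
move=> r0 [nz [hF _]].
have eF : F = F@_0%MM *: 'X_[0%MM].
  apply: mpoly1E => m /hF; rewrite muln0 => /eqP; rewrite mdeg_eq0 => /eqP //.
have c0 : F@_0%MM != 0.
  by apply: contra nz => /eqP c0; rewrite eF c0 scale0r.
have comp0 : forall k (lq : 3.-tuple {mpoly CC[k]}), 0%MM \in msupp (F \mPo lq).
  move=> k lq; rewrite eF comp_mpolyZ mpolyX0 comp_mpoly1 -mul_mpolyC mulr1.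
  by rewrite msuppC (negbTE c0) inE.
case: Q => [x y z|a b|a b] /=.
- by move/mult_ge_P2_shift => /(_ _ (comp0 _ _)); rewrite mdeg0; case: r r0.
- move/mult_ge_E1_T1 => /(_ _ (comp0 _ _)) [_]; rewrite !mnm0E addn0; by case: r r0.
- move/mult_ge_E2_T2 => /(_ _ (comp0 _ _)) [_]; rewrite !mnm0E addn0; by case: r r0.
Qed.

Definition lf1 (a b : CC) : poly3 := b%:MP * 'X_1 - a%:MP * 'X_2.
Definition lf2 (a b : CC) : poly3 := b%:MP * 'X_0 - a%:MP * 'X_2.

Lemma lf1_T1 a b a' b' : b * a' = a * b' ->
  lf1 a b \mPo T1 a' b' = (b * (transv a' b').1 - a * (transv a' b').2)%:MP * ('X_0 * 'X_1).
Proof.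
move=> h; rewrite /lf1 comp_mpolyB !compM !comp_mpolyC !compXt !(tnth_nth 0) /T1 /=.
case: (transv a' b') => c e /=.
transitivity ((b * a' - a * b')%:MP * 'X_0 + (b * c - a * e)%:MP * ('X_0 * 'X_1) : poly2).
  ring.
by rewrite h subrr mul0r add0r.
Qed.

Lemma lob_X0X1 k : lob wu 1 (k%:MP * ('X_0 * 'X_1) : poly2) /\ lob wt 2 (k%:MP * ('X_0 * 'X_1) : poly2).
Proof.
split.
  have := lobM wuD (@lobC _ wu k) (lobM wuD (@lobX _ wu (mnm1 (0%R : 'I_2))) (@lobX _ wu (mnm1 (1%R : 'I_2)))).
  by rewrite /wu !mnm1E.
have := lobM wtD (@lobC _ wt k) (lobM wtD (@lobX _ wt (mnm1 (0%R : 'I_2))) (@lobX _ wt (mnm1 (1%R : 'I_2)))).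
by rewrite /wt !mnm1E.
Qed.

Lemma lob_X0L c1 c2 : lob wu 1 ('X_0 * (c1%:MP + 'X_1 * c2%:MP) : poly2) /\
                      lob wt 1 ('X_0 * (c1%:MP + 'X_1 * c2%:MP) : poly2).
Proof.
split.
  have := lobM wuD (@lobX _ wu (mnm1 (0%R : 'I_2))) (fun m (_ : m \in msupp (c1%:MP + 'X_1 * c2%:MP : poly2)) => leq0n (wu m)).
  by rewrite /wu !mnm1E.
have := lobM wtD (@lobX _ wt (mnm1 (0%R : 'I_2))) (fun m (_ : m \in msupp (c1%:MP + 'X_1 * c2%:MP : poly2)) => leq0n (wt m)).
by rewrite /wt !mnm1E.
Qed.

Lemma mult_ge_E1_lobT d F a b r :
  lob wu d (F \mPo T1 a b) -> lob wt (r + d) (F \mPo T1 a b) -> mult_ge_E1 d F a b r.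
Proof. by move=> h1 h2; apply/mult_ge_E1_T1 => m hm; split; [apply: h1 | apply: h2]. Qed.

Lemma multE1_F1 a b a' b' : b * a' = a * b' ->
  mult_ge_E1 1 (lf1 a b ^+ 2 * 'X_2) a' b' 4 /\
  mult_ge_E1 2 ((lf1 a b ^+ 2 * 'X_2) ^+ 2) a' b' 5.
Proof.
move=> h.
have eG : (lf1 a b ^+ 2 * 'X_2) \mPo T1 a' b' =
   ((b * (transv a' b').1 - a * (transv a' b').2)%:MP * ('X_0 * 'X_1)) ^+ 2 *
   ('X_0 * (b'%:MP + 'X_1 * (transv a' b').2%:MP)).
  by rewrite compM rmorphXn /= lf1_T1 // compXt (tnth_nth 0).
have [l1 l2] := lob_X0X1 (b * (transv a' b').1 - a * (transv a' b').2).
have [l3 l4] := lob_X0L b' (transv a' b').2.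
have hu := lobM wuD (lobXn wuD (k:=2) l1) l3.
have ht := lobM wtD (lobXn wtD (k:=2) l2) l4.
rewrite -eG /= in hu ht.
split; apply: mult_ge_E1_lobT.
- exact: lobW hu.
- exact: ht.
- by rewrite rmorphXn /=; apply: lobW (lobXn wuD (k:=2) hu).
- by rewrite rmorphXn /=; apply: lobW (lobXn wtD (k:=2) ht).
Qed.


Lemma i32 : (2%R : 'I_3) = o32. Proof. by apply: val_inj. Qed.
Lemma i31 : (1%R : 'I_3) = o31. Proof. by apply: val_inj. Qed.
Lemma i30 : (0%R : 'I_3) = ord0. Proof. by apply: val_inj. Qed.

Lemma compXn n k (p : {mpoly CC[n]}) (lq : n.-tuple {mpoly CC[k]}) e :
  (p ^+ e) \mPo lq = (p \mPo lq) ^+ e.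
Proof. exact: rmorphXn. Qed.

Lemma multE1_X2 a' : a' != 0 -> mult_ge_E1 1 ('X_2 ^+ 3) a' 0 5.
Proof.
move=> ha.
have eG : 'X_2 \mPo T1 a' 0 = 1%:MP * ('X_0 * 'X_1).
  rewrite compXt i32 (tnth_nth 0) [nth _ _ _]/= /transv (negbTE ha) /=.
  by rewrite mpolyC0 add0r mpolyC1 !mul1r mulr1.
have [l1 l2] := lob_X0X1 1.
apply: mult_ge_E1_lobT; rewrite compXn eG.
- exact: lobW (lobXn wuD (k:=3) l1).
- exact: (lobXn wtD (k:=3) l2).
Qed.

Lemma lf_sw a b : lf2 a b \mPo sw = lf1 a b.
Proof.
rewrite /lf2 comp_mpolyB !compM !comp_mpolyC !compXt i30 i32 !(tnth_nth 0) [nth _ _ ord0]/= [nth _ _ o32]/=.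
by [].
Qed.

Lemma X2_sw : 'X_2 \mPo sw = 'X_2.
Proof. by rewrite compXt i32 (tnth_nth 0) [nth _ _ _]/=. Qed.

Lemma multE2_F2 a b a' b' : b * a' = a * b' ->
  mult_ge_E2 1 (lf2 a b ^+ 2 * 'X_2) a' b' 4 /\
  mult_ge_E2 2 ((lf2 a b ^+ 2 * 'X_2) ^+ 2) a' b' 5.
Proof.
move=> h; have [h1 h2] := multE1_F1 h.
split; apply/mult_ge_E2_sw; rewrite ?compXn compM compXn lf_sw X2_sw //.
Qed.

Lemma multE2_X2 a' : a' != 0 -> mult_ge_E2 1 ('X_2 ^+ 3) a' 0 5.
Proof.
by move=> ha; apply/mult_ge_E2_sw; rewrite compXn X2_sw; apply: multE1_X2.
Qed.

Lemma X2_neq0 : ('X_2 : poly3) != 0.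
Proof. by apply/eqP => h; have := msuppX CC (U_(2%R : 'I_3))%MM; rewrite h msupp0. Qed.

Lemma sec_gen d (H : poly3) k : H != 0 -> homog3 (3 * d - k) H -> (d <= k)%N -> (k <= 3 * d)%N ->
  section_dL2 d (H * 'X_2 ^+ k).
Proof.
move=> nz /homog3_bnd [hl hh] dk k3.
have lX : lob mdeg (1 * k) ('X_2 ^+ k : poly3) := lobXn mdegD (@lobXi 3 2%R).
have hX : hib mdeg (1 * k) ('X_2 ^+ k : poly3) := hibXn mdegD (@hibXi 3 2%R).
split; first by rewrite mulf_neq0 // expf_neq0 // X2_neq0.
have sh : forall x y, lob mdeg d ((H * 'X_2 ^+ k) \mPo shift3 x y 0).
  move=> x y; rewrite compM compXn compXt i32 (tnth_nth 0) [nth _ _ _]/= mpolyC0 addr0.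
  apply: lobW (lobM mdegD (fun m (_ : m \in msupp (H \mPo shift3 x y 0)) => leq0n (mdeg m)) lX).
  lia.
split; last by split; apply: mult_ge_P2_lob; apply: sh.
apply/homog3_bnd; split.
  by apply: lobW (lobM mdegD hl lX); lia.
by apply: hibW (hibM mdegD hh hX); lia.
Qed.

Lemma sec_l (l : poly3) : l != 0 -> lob mdeg 1 l -> hib mdeg 1 l ->
  section_dL2 1 (l ^+ 2 * 'X_2) /\ section_dL2 2 ((l ^+ 2 * 'X_2) ^+ 2).
Proof.
move=> nz hl hh; split.
  rewrite -[X in section_dL2 _ (_ * X)]expr1; apply: sec_gen => //.
    by rewrite expf_neq0.
  apply/homog3_bnd; split; [apply: lobW (lobXn mdegD (k:=2) hl) | apply: hibW (hibXn mdegD (k:=2) hh)]; lia.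
rewrite exprMn -exprM; apply: sec_gen => //; first by rewrite expf_neq0.
apply/homog3_bnd; split; [apply: lobW (lobXn mdegD (k:=4) hl) | apply: hibW (hibXn mdegD (k:=4) hh)]; lia.
Qed.

Lemma sec_X23 : section_dL2 1 ('X_2 ^+ 3).
Proof.
rewrite -[X in section_dL2 _ X]mul1r; apply: sec_gen => //; first exact: oner_neq0.
by move=> m; rewrite msupp1 inE => /eqP ->; rewrite mdeg0.
Qed.

Lemma lf1_bnd a b : lob mdeg 1 (lf1 a b) /\ hib mdeg 1 (lf1 a b).
Proof. by split; [apply: lobB; apply: lobCX | apply: hibB; apply: hibCX]. Qed.
Lemma lf2_bnd a b : lob mdeg 1 (lf2 a b) /\ hib mdeg 1 (lf2 a b).
Proof. by split; [apply: lobB; apply: lobCX | apply: hibB; apply: hibCX]. Qed.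

Lemma lf1_neq0 a b : (a, b) <> (0, 0) -> lf1 a b != 0.
Proof.
move=> ab; apply/eqP => h.
have c1 := congr1 (meval (ev3 0 1 0)) h.
have c2 := congr1 (meval (ev3 0 0 1)) h.
move: c1 c2; rewrite /lf1 !mevalB !mevalM !mevalC !mevalXU ?meval0.
have [_ -> ->] := ev3E 0 1 0; have [_ -> ->] := ev3E 0 0 1.
rewrite !mulr1 !mulr0 subr0 sub0r => b0 /eqP; rewrite oppr_eq0 => /eqP a0.
by apply: ab; rewrite a0 b0.
Qed.

Lemma lf2_neq0 a b : (a, b) <> (0, 0) -> lf2 a b != 0.
Proof.
move=> ab; apply/eqP => h.
have c1 := congr1 (meval (ev3 1 0 0)) h.
have c2 := congr1 (meval (ev3 0 0 1)) h.
move: c1 c2; rewrite /lf2 !mevalB !mevalM !mevalC !mevalXU ?meval0.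
have [-> _ ->] := ev3E 1 0 0; have [-> _ ->] := ev3E 0 0 1.
rewrite !mulr1 !mulr0 subr0 sub0r => b0 /eqP; rewrite oppr_eq0 => /eqP a0.
by apply: ab; rewrite a0 b0.
Qed.


Lemma has_divbE Z m d : has_divb Z m d = true <-> has_div Z m d.
Proof. by rewrite /has_divb; case: excluded_middle_informative. Qed.

Lemma alpha_min Z m : (exists d, has_div Z m d) ->
  has_div Z m (alpha Z m) /\ forall d, has_div Z m d -> (alpha Z m <= d)%N.
Proof.
move=> [d0 h0]; rewrite /alpha; case: excluded_middle_informative => [H|nH]; last first.
  by exfalso; apply: nH; exists d0; apply/has_divbE.
case: ex_minnP => n /has_divbE hn hmin; split=> // d /has_divbE hd; exact: hmin.
Qed.

Lemma alpha_eq1 Z m : has_div Z m 1 -> ~ has_div Z m 0 -> alpha Z m = 1%N.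
Proof.
move=> h1 h0; have [ha hm] := alpha_min (ex_intro _ 1%N h1).
have := hm _ h1; case E: (alpha Z m) => [|[|k]] //.
by rewrite E in ha.
Qed.

Lemma alpha_gt1 Z m d : has_div Z m d -> ~ has_div Z m 0 -> ~ has_div Z m 1 -> (1 < alpha Z m)%N.
Proof.
move=> hd h0 h1; have [ha hm] := alpha_min (ex_intro _ d hd).
case E: (alpha Z m) => [|[|k]] //; by rewrite E in ha.
Qed.

Lemma alpha1_div Z m : alpha Z m = 1%N -> has_div Z m 1.
Proof.
rewrite /alpha; case: excluded_middle_informative => [H|//].
case: ex_minnP => n /has_divbE hn _ e; by rewrite -e.
Qed.

Lemma alpha_gt1_nodiv Z m : (1 < alpha Z m)%N -> ~ has_div Z m 1.
Proof.
move=> h h1; have [_ hm] := alpha_min (ex_intro _ 1%N h1).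
by have := hm _ h1; lia.
Qed.

Lemma mult_ge_mono d F Q r r' : (r' <= r)%N -> mult_ge d F Q r -> mult_ge d F Q r'.
Proof.
move=> le; case: Q => [x y z|a b|a b] /=.
- move/mult_ge_P2_shift => h; apply/mult_ge_P2_shift => m hm.
  by apply: leq_trans le _; apply: h.
- move/mult_ge_E1_T1 => h; apply/mult_ge_E1_T1 => m hm.
  by have [h1 h2] := h m hm; split => //; apply: leq_trans h2; rewrite leq_add2r.
- move/mult_ge_E2_T2 => h; apply/mult_ge_E2_T2 => m hm.
  by have [h1 h2] := h m hm; split => //; apply: leq_trans h2; rewrite leq_add2r.
Qed.

Lemma nodiv0Z Z m : Z <> [::] -> (0 < m)%N -> ~ has_div Z m 0.
Proof.
case: Z => [//|Q Z] _ m0 [F [sF hF]].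
by apply: (nodiv0 (Q := Q) m0 sF); apply: hF; left.
Qed.

Lemma two_neq0 : (2%:R : CC) != 0.
Proof.
have : (2%:R : Rdefinitions.R[i]) != 0 by rewrite pnatr_eq0.
done.
Qed.

Lemma sdiff (q a b A B : CC) :
  q * (b * 0 - a) ^+ 2 = A * 0 + B -> q * (b * 1 - a) ^+ 2 = A * 1 + B ->
  q * (b * 2 - a) ^+ 2 = A * 2 + B -> q * b ^+ 2 = 0.
Proof.
move=> h0 h1 h2.
have : 2 * (q * b ^+ 2) = 0.
  transitivity (q * (b * 0 - a) ^+ 2 - 2 * (q * (b * 1 - a) ^+ 2) + q * (b * 2 - a) ^+ 2).
    ring.
  rewrite h0 h1 h2; ring.
by move/eqP; rewrite mulf_eq0 (negbTE two_neq0) /= => /eqP.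
Qed.


Lemma pair_neq0 (c a b : CC) : c != 0 -> b != 0 -> (c * a, c * b) <> (0, 0).
Proof. by move=> c0 b0 [_ /eqP]; rewrite mulf_eq0 (negbTE c0) (negbTE b0). Qed.

Lemma dir1 Z : Z <> [::] ->
  (exists Q, valid_pt Q /\ on_exc Q /\ ~ on_L12t Q /\ (forall Q', List.In Q' Z -> same_pt Q Q')) ->
  (alpha Z 1 = 1 /\ alpha Z 2 = 1 /\ alpha Z 3 = 1 /\ alpha Z 4 = 1 /\ 1 < alpha Z 5)%N.
Proof.
move=> nZ [Q [vQ [eQ [lQ hQ]]]].
have n0 : forall m, (0 < m)%N -> ~ has_div Z m 0 by move=> m; apply: nodiv0Z.
case: Q vQ eQ lQ hQ => [x y z|a b|a b] vQ // _ lQ hQ.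
- have bnz : b != 0 by apply/eqP.
  set F1 := lf1 a b ^+ 2 * 'X_2.
  have [s1 s2] := sec_l (lf1_neq0 vQ) (lf1_bnd a b).1 (lf1_bnd a b).2.
  have hm : forall Q', List.In Q' Z -> mult_ge 1 F1 Q' 4 /\ mult_ge 2 (F1 ^+ 2) Q' 5.
    move=> Q' /hQ; case: Q' => [? ? ?|a' b'|? ?] // [c [c0 [-> ->]]].
    by apply: multE1_F1; ring.
  have d1 : forall m, (m <= 4)%N -> has_div Z m 1.
    move=> m m4; exists F1; split; first exact: s1.
    move=> Q' /hm [h _]; exact: (mult_ge_mono m4 h).
  have no1 : ~ has_div Z 5 1.
    move=> [F [sF hF]]; case: Z nZ hQ hF {n0 hm d1} => [nZ|Q0 Z' _ hQ hF]; first by case: nZ.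
    move: (hF Q0 (or_introl erefl)) (hQ Q0 (or_introl erefl)); clear hQ hF.
    case: Q0 => [? ? ? _ []|a' b' h5 [c [c0 [ea eb]]]|? ? _ []].
    have [nz [hom [_ p2]]] := sF.
    subst a' b'.
    have [q [fq q0]] := E1_5 hom (pair_neq0 (a := a) c0 bnz) h5.
    have := multP2_eval p2; rewrite fq mulr1 mulr0 subr0 => /eqP.
    rewrite mulf_eq0 expf_eq0 mulf_eq0 (negbTE c0) (negbTE bnz) andbF orbF => /eqP qz.
    by have F0 := q0 qz; rewrite F0 eqxx in nz.
  split; first by apply: alpha_eq1; [apply: d1 | apply: n0].
  split; first by apply: alpha_eq1; [apply: d1 | apply: n0].
  split; first by apply: alpha_eq1; [apply: d1 | apply: n0].
  split; first by apply: alpha_eq1; [apply: d1 | apply: n0].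
  apply: (alpha_gt1 (d := 2)) => //; last exact: n0.
  exists (F1 ^+ 2); split; first exact: s2.
  by move=> Q' /hm [].
- have bnz : b != 0 by apply/eqP.
  set F1 := lf2 a b ^+ 2 * 'X_2.
  have [s1 s2] := sec_l (lf2_neq0 vQ) (lf2_bnd a b).1 (lf2_bnd a b).2.
  have hm : forall Q', List.In Q' Z -> mult_ge 1 F1 Q' 4 /\ mult_ge 2 (F1 ^+ 2) Q' 5.
    move=> Q' /hQ; case: Q' => [? ? ?|? ?|a' b'] // [c [c0 [-> ->]]].
    by apply: multE2_F2; ring.
  have d1 : forall m, (m <= 4)%N -> has_div Z m 1.
    move=> m m4; exists F1; split; first exact: s1.
    move=> Q' /hm [h _]; exact: (mult_ge_mono m4 h).
  have no1 : ~ has_div Z 5 1.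
    move=> [F [sF hF]]; case: Z nZ hQ hF {n0 hm d1} => [nZ|Q0 Z' _ hQ hF]; first by case: nZ.
    move: (hF Q0 (or_introl erefl)) (hQ Q0 (or_introl erefl)); clear hQ hF.
    case: Q0 => [? ? ? _ []|? ? _ []|a' b' h5 [c [c0 [ea eb]]]].
    have [nz [hom [p1 _]]] := sF.
    subst a' b'.
    have [q [fq q0]] := E2_5 hom (pair_neq0 (a := a) c0 bnz) h5.
    have := multP2_eval p1; rewrite fq mulr1 mulr0 subr0 => /eqP.
    rewrite mulf_eq0 expf_eq0 mulf_eq0 (negbTE c0) (negbTE bnz) andbF orbF => /eqP qz.
    by have F0 := q0 qz; rewrite F0 eqxx in nz.
  split; first by apply: alpha_eq1; [apply: d1 | apply: n0].
  split; first by apply: alpha_eq1; [apply: d1 | apply: n0].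
  split; first by apply: alpha_eq1; [apply: d1 | apply: n0].
  split; first by apply: alpha_eq1; [apply: d1 | apply: n0].
  apply: (alpha_gt1 (d := 2)) => //; last exact: n0.
  exists (F1 ^+ 2); split; first exact: s2.
  by move=> Q' /hm [].
Qed.

Definition offL (Q : S2pt) : Prop :=
  match Q with Pl _ _ _ => False | Ex1 _ b => b <> 0 | Ex2 _ b => b <> 0 end.

Lemma same_from (a b a' b' : CC) : b != 0 -> b' != 0 -> b * a' = a * b' ->
  exists c : CC, c != 0 /\ a' = c * a /\ b' = c * b.
Proof.
move=> bnz b'nz e; exists (b' / b); split; first by rewrite mulf_neq0 ?invr_eq0.
split; last by field.
transitivity (b * a' / b); first by field.
by rewrite e; field.
Qed.

Lemma dir2 Z : Z <> [::] -> (forall Q, List.In Q Z -> valid_pt Q) ->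
  (alpha Z 1 = 1 /\ alpha Z 2 = 1 /\ alpha Z 3 = 1 /\ alpha Z 4 = 1 /\ 1 < alpha Z 5)%N ->
  (exists Q, valid_pt Q /\ on_exc Q /\ ~ on_L12t Q /\ (forall Q', List.In Q' Z -> same_pt Q Q')).
Proof.
move=> nZ vZ [_ [_ [_ [a4 a5]]]].
have [F [sF hF]] := alpha1_div a4.
have no5 := alpha_gt1_nodiv a5.
have [nz [hom [p1 p2]]] := sF.
have hom3 : homog3 3 F := hom.
have noPl : forall x y z, ~ List.In (Pl x y z) Z.
  move=> x y z /hF h; have F0 := multP2_4 hom3 h; by rewrite F0 eqxx in nz.
case: (classic (exists Q1, List.In Q1 Z /\ offL Q1)) => [[Q1 [inQ1 oQ1]] | nof]; last first.
  exfalso; apply: no5; exists ('X_2 ^+ 3); split; first exact: sec_X23.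
  move=> Q inQ; have vQ := vZ Q inQ.
  case: Q inQ vQ => [x y z|a b|a b] inQ vQ.
  - by case: (noPl _ _ _ inQ).
  - have b0 : b = 0 by apply: NNPP => bn; apply: nof; exists (Ex1 a b).
    subst b; have a0 : a != 0 by apply/eqP => a0; apply: vQ; rewrite a0.
    exact: multE1_X2 a0.
  - have b0 : b = 0 by apply: NNPP => bn; apply: nof; exists (Ex2 a b).
    subst b; have a0 : a != 0 by apply/eqP => a0; apply: vQ; rewrite a0.
    exact: multE2_X2 a0.
exists Q1; have vQ := vZ _ inQ1.
case: Q1 inQ1 oQ1 vQ => [x y z|a b|a b] inQ1 oQ1 vQ; first by case: oQ1.
- have bnz : b != 0 by apply/eqP.
  split; first exact: vQ. split; first by []. split; first exact: oQ1.
  have [p [q [f1 z1]]] := E1_4 hom3 vQ (hF _ inQ1).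
  have p0 : p = 0.
    have := multP2_eval p2; rewrite f1 mulr1 mulr0 subr0 mulr0 addr0 mulr1 => /eqP.
    by rewrite mulf_eq0 expf_eq0 (negbTE bnz) andbF /= => /eqP.
  have qnz : q != 0 by apply/eqP => q0; move: nz; rewrite (z1 p0 q0) eqxx.
  have qb : q * b ^+ 2 != 0 by rewrite mulf_neq0 // expf_neq0.
  move=> Q inQ; have vQ' := vZ _ inQ.
  case: Q inQ vQ' => [x y z|a' b'|a' b'] inQ vQ'.
  + by case: (noPl _ _ _ inQ).
  + have [p' [q' [f2 _]]] := E1_4 hom3 vQ' (hF _ inQ).
    case: (eqVneq b' 0) => [b'0|b'nz].
    * exfalso; subst b'.
      have e : forall t, q * (b * t - a) ^+ 2 = a' ^+ 2 * p' * t + a' ^+ 2 * q'.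
        move=> t; have := f1 0 t 1; rewrite f2 p0 => h.
        transitivity ((b * t - a * 1) ^+ 2 * (0 * t + q * 1)); first ring.
        by rewrite -h; ring.
      by move: qb; rewrite (sdiff (e 0) (e 1) (e 2)) eqxx.
    * have h := f1 0 a' b'; rewrite f2 p0 in h.
      have : (b * a' - a * b') ^+ 2 * (q * b') = 0.
        transitivity ((b * a' - a * b') ^+ 2 * (0 * a' + q * b')); first ring.
        by rewrite -h; ring.
      move/eqP; rewrite mulf_eq0 expf_eq0 mulf_eq0 (negbTE qnz) (negbTE b'nz) /= orbF subr_eq0.
      by move/eqP; apply: same_from.
  + have [p' [q' [f2 _]]] := E2_4 hom3 vQ' (hF _ inQ).
    exfalso.
    have e : forall t, q * (b * t - a) ^+ 2 = 0 * t + a' ^+ 2 * q'.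
      move=> t; have := f1 0 t 1; rewrite f2 p0 => h.
      transitivity ((b * t - a * 1) ^+ 2 * (0 * t + q * 1)); first ring.
      by rewrite -h; ring.
    by move: qb; rewrite (sdiff (e 0) (e 1) (e 2)) eqxx.
- have bnz : b != 0 by apply/eqP.
  split; first exact: vQ. split; first by []. split; first exact: oQ1.
  have [p [q [f1 z1]]] := E2_4 hom3 vQ (hF _ inQ1).
  have p0 : p = 0.
    have := multP2_eval p1; rewrite f1 mulr1 mulr0 subr0 mulr0 addr0 mulr1 => /eqP.
    by rewrite mulf_eq0 expf_eq0 (negbTE bnz) andbF /= => /eqP.
  have qnz : q != 0 by apply/eqP => q0; move: nz; rewrite (z1 p0 q0) eqxx.
  have qb : q * b ^+ 2 != 0 by rewrite mulf_neq0 // expf_neq0.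
  move=> Q inQ; have vQ' := vZ _ inQ.
  case: Q inQ vQ' => [x y z|a' b'|a' b'] inQ vQ'.
  + by case: (noPl _ _ _ inQ).
  + have [p' [q' [f2 _]]] := E1_4 hom3 vQ' (hF _ inQ).
    exfalso.
    have e : forall t, q * (b * t - a) ^+ 2 = 0 * t + a' ^+ 2 * q'.
      move=> t; have := f1 t 0 1; rewrite f2 p0 => h.
      transitivity ((b * t - a * 1) ^+ 2 * (0 * t + q * 1)); first ring.
      by rewrite -h; ring.
    by move: qb; rewrite (sdiff (e 0) (e 1) (e 2)) eqxx.
  + have [p' [q' [f2 _]]] := E2_4 hom3 vQ' (hF _ inQ).
    case: (eqVneq b' 0) => [b'0|b'nz].
    * exfalso; subst b'.
      have e : forall t, q * (b * t - a) ^+ 2 = a' ^+ 2 * p' * t + a' ^+ 2 * q'.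
        move=> t; have := f1 t 0 1; rewrite f2 p0 => h.
        transitivity ((b * t - a * 1) ^+ 2 * (0 * t + q * 1)); first ring.
        by rewrite -h; ring.
      by move: qb; rewrite (sdiff (e 0) (e 1) (e 2)) eqxx.
    * have h := f1 a' 0 b'; rewrite f2 p0 in h.
      have : (b * a' - a * b') ^+ 2 * (q * b') = 0.
        transitivity ((b * a' - a * b') ^+ 2 * (0 * a' + q * b')); first ring.
        by rewrite -h; ring.
      move/eqP; rewrite mulf_eq0 expf_eq0 mulf_eq0 (negbTE qnz) (negbTE b'nz) /= orbF subr_eq0.
      by move/eqP; apply: same_from.
Qed.

Theorem theorem4 (Z : seq S2pt) :
  Z <> [::] ->
  (forall Q, List.In Q Z -> valid_pt Q) ->
  ((exists Q, valid_pt Q /\ on_exc Q /\ ~ on_L12t Q /\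
              (forall Q', List.In Q' Z -> same_pt Q Q'))
   <->
   (alpha Z 1 = 1 /\ alpha Z 2 = 1 /\ alpha Z 3 = 1 /\ alpha Z 4 = 1 /\
    1 < alpha Z 5)%N).
Proof.
move=> nZ vZ; split; [exact: dir1 | exact: dir2].
Qed.
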